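(* Let $v=v_1\cdots v_n$ be a word of distinct positive integers avoiding $31425,32415,31524,32514$, with positions of left-to-right maxima $a_1<\dots<a_h$ and of right-to-left maxima $b_1<\dots<b_g$ ($a_1=1$, $a_h=b_1$, $b_g=n$). Assume $h>1$, $g>1$, $a_h>h$ and $v_{a_{h-1}}<v_{b_2}$. Then exactly one of the following holds: (A-1) $a_h=a_{h-1}+1$; (A-2) $a_h>a_{h-1}+1$ and $b_2=a_h+1$; (A-3) $a_h>a_{h-1}+1$, $b_2>a_h+1$, and $v_j>v_{a_{h-1}}$ for all $a_h<j<b_2$.
   Context: A word of distinct positive integers avoids a pattern $P$ (a permutation of $[m]$) if no subsequence of length $m$ is order-isomorphic to $P$. A left-to-right (resp. right-to-left) maximum of $v$ is a letter $v_i$ greater than all letters to its left (resp. right). *)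

(* Defs.v *)
From mathcomp Require Import all_boot.
Set Implicit Arguments. Unset Strict Implicit. Unset Printing Implicit Defensive.

(* Words are sequences of naturals; positions are 1-indexed as in the paper:
   letter i of v (1 <= i <= size v) is [nth 0 v i.-1]. *)
Definition letter (v : seq nat) (i : nat) : nat := nth 0 v i.-1.

Definition distinct_pos_word (v : seq nat) : Prop := uniq v /\ all (fun x => 0 < x) v.

Definition order_iso (s P : seq nat) : Prop :=
  size s = size P /\
  forall i j, i < size s -> j < size s -> (nth 0 s i < nth 0 s j) = (nth 0 P i < nth 0 P j).

Definition avoids (v P : seq nat) : Prop :=
  ~ exists s : seq nat, subseq s v /\ order_iso s P.

Definition ltr_max_pos (v : seq nat) : seq nat :=
  [seq i <- iota 1 (size v) | all (fun j => letter v j < letter v i) (iota 1 i.-1)].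

Definition rtl_max_pos (v : seq nat) : seq nat :=
  [seq i <- iota 1 (size v) | all (fun j => letter v j < letter v i) (iota i.+1 (size v - i))].

Definition kth (s : seq nat) (k : nat) : nat := nth 0 s k.-1.

(* Main.v *)
Require Import Defs.
From mathcomp Require Import all_boot zify.

Lemma drop_mono (v : seq nat) i j : i <= j -> subseq (drop j v) (drop i v).
Proof. move=> H; rewrite -(subnK H) -drop_drop; exact: drop_subseq. Qed.

Lemma sub_step (v s : seq nat) i j : i < j -> i < size v ->
  subseq s (drop j v) -> subseq (nth 0 v i :: s) (drop i v).
Proof.
move=> Hij Hi Hs; rewrite (drop_nth 0 Hi) /= eqxx.
apply: (subseq_trans Hs); exact: drop_mono.
Qed.

Lemma letter_inj v p q : uniq v -> 0 < p <= size v -> 0 < q <= size v ->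
  letter v p = letter v q -> p = q.
Proof.
move=> Hu Hp Hq /eqP; rewrite /letter nth_uniq //; try lia.
Qed.

Lemma exists_ltr v i : 0 < i <= size v ->
  exists2 k, k \in ltr_max_pos v & (k <= i) && (letter v i <= letter v k).
Proof.
move: {2}i (leqnn i) => m; elim: m i => [|m IH] i Hi Hr; first lia.
case H: (all (fun j => letter v j < letter v i) (iota 1 i.-1)).
  exists i; last by rewrite !leqnn.
  rewrite mem_filter H mem_iota; apply/andP; split=> //; lia.
move/negbT: H; rewrite -has_predC => /hasP [j Hj /= Hn].
rewrite mem_iota in Hj; rewrite -leqNgt in Hn.
have [||k Hk /andP [H1 H2]] := IH j; try lia.
exists k => //; apply/andP; split; first lia.
exact: leq_trans Hn H2.
Qed.

Lemma ltr_mem v k : k \in ltr_max_pos v ->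
  0 < k <= size v /\ forall j, 0 < j < k -> letter v j < letter v k.
Proof.
rewrite mem_filter mem_iota => /andP [/allP H1 H2]; split; first lia.
move=> j Hj; apply: H1; rewrite mem_iota; lia.
Qed.

Lemma rtl_mem v k : k \in rtl_max_pos v ->
  0 < k <= size v /\ forall j, k < j <= size v -> letter v j < letter v k.
Proof.
rewrite mem_filter mem_iota => /andP [/allP H1 H2]; split; first lia.
move=> j Hj; apply: H1; rewrite mem_iota; lia.
Qed.

Lemma ltr_le v k k' : k \in ltr_max_pos v -> k' \in ltr_max_pos v -> k <= k' ->
  letter v k <= letter v k'.
Proof.
move=> Hk Hk' Hle; case: (ltnP k k') => H.
  have [Hr _] := ltr_mem _ _ Hk; have [_ H'] := ltr_mem _ _ Hk'.
  apply: ltnW; apply: H'; lia.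
have -> : k = k' by apply/eqP; rewrite eqn_leq Hle H.
done.
Qed.

Lemma ltr_sorted v : sorted ltn (ltr_max_pos v).
Proof. apply: sorted_filter; [exact: ltn_trans | exact: iota_ltn_sorted]. Qed.
Lemma rtl_sorted v : sorted ltn (rtl_max_pos v).
Proof. apply: sorted_filter; [exact: ltn_trans | exact: iota_ltn_sorted]. Qed.

Ltac clean := repeat match goal with
  | H : context[letter] |- _ => clear H
  | H : avoids _ _ |- _ => clear H
  | H : sorted _ _ |- _ => clear H
  | H : is_true (_ \in _) |- _ => clear H
  | H : forall _, _ |- _ => clear H
  | H : uniq _ |- _ => clear H
  end.
Ltac plia := rewrite -?subn1; try (match goal with E : size _ = _.+2 |- _ => rewrite ?E end); try (match goal with E : size _ = _.+2, F : size _ = _.+2 |- _ => rewrite ?E ?F end);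
  (match goal with |- context[letter] => idtac | _ => clean end); lia.
Ltac bsolve := first [ reflexivity | lia | apply/negbTE; rewrite -leqNgt; lia | idtac "FAIL"; match goal with |- ?G => idtac G end; fail ].

Lemma iso1 (p q c d e : nat) : p < c -> q < c -> c < e -> e < d -> p < q ->
  order_iso [:: c; p; d; q; e] [:: 3; 1; 5; 2; 4].
Proof.
move=> *; split=> // i j Hi Hj.
do 5 (case: i Hi => [|i] Hi; [do 5 (case: j Hj => [|j] Hj; [simpl; bsolve|]); done|]); done.
Qed.

Lemma iso2 (p q c d e : nat) : p < c -> q < c -> c < e -> e < d -> q < p ->
  order_iso [:: c; p; d; q; e] [:: 3; 2; 5; 1; 4].
Proof.
move=> *; split=> // i j Hi Hj.
do 5 (case: i Hi => [|i] Hi; [do 5 (case: j Hj => [|j] Hj; [simpl; bsolve|]); done|]); done.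
Qed.

Theorem lemma3p9 (v : seq nat) :
  distinct_pos_word v ->
  avoids v [:: 3; 1; 4; 2; 5] -> avoids v [:: 3; 2; 4; 1; 5] ->
  avoids v [:: 3; 1; 5; 2; 4] -> avoids v [:: 3; 2; 5; 1; 4] ->
  let a := ltr_max_pos v in
  let b := rtl_max_pos v in
  let h := size a in
  let g := size b in
  1 < h -> 1 < g -> h < kth a h ->
  letter v (kth a h.-1) < letter v (kth b 2) ->
  let A1 := kth a h = (kth a h.-1).+1 in
  let A2 := (kth a h.-1).+1 < kth a h /\ kth b 2 = (kth a h).+1 in
  let A3 := [/\ (kth a h.-1).+1 < kth a h, (kth a h).+1 < kth b 2 &
                forall j, kth a h < j < kth b 2 -> letter v (kth a h.-1) < letter v j] in
  (A1 /\ ~ A2 /\ ~ A3) \/ (~ A1 /\ A2 /\ ~ A3) \/ (~ A1 /\ ~ A2 /\ A3).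
Proof.
move=> [Hu _] N1 N2 N3 N4 a b h g Hh Hg _ Hlt A1 A2 A3.
rewrite /A1 /A2 /A3 /kth /= in Hlt *; clear A1 A2 A3; subst h g.
rewrite /a /b in Hh Hg Hlt *; clear a b.
set a := ltr_max_pos v in Hh Hlt *. set b := rtl_max_pos v in Hg Hlt *.
have LM : forall k, k \in a -> 0 < k <= size v /\ forall j, 0 < j < k -> letter v j < letter v k by exact: ltr_mem.
have RM : forall k, k \in b -> 0 < k <= size v /\ forall j, k < j <= size v -> letter v j < letter v k by exact: rtl_mem.
have EX : forall i, 0 < i <= size v -> exists2 k, k \in a & (k <= i) && (letter v i <= letter v k) by exact: exists_ltr.
have LE : forall k k', k \in a -> k' \in a -> k <= k' -> letter v k <= letter v k' by exact: ltr_le.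
have sa : sorted ltn a by exact: ltr_sorted.
have sb : sorted ltn b by exact: rtl_sorted.
clearbody a b.
have [n0 Ek] : exists n0, size a = n0.+2.
  move: Hh; case: (size a) => [|[|m]] // _; by exists m.
rewrite Ek /= in Hlt *.
set ah := nth 0 a n0.+1 in Hlt *.
set a' := nth 0 a n0 in Hlt *.
set b2 := nth 0 b 1 in Hlt *.
have sa' : sorted leq a by move: sa; rewrite ltn_sorted_uniq_leq => /andP[].
have Hah : ah \in a by apply: mem_nth; plia.
have Ha' : a' \in a by apply: mem_nth; plia.
have Haa : a' < ah.
  by apply: (sorted_ltn_nth ltn_trans 0 sa); rewrite ?inE; plia.
have [Hahr Hahm] := LM _ Hah.
have [Ha'r Ha'm] := LM _ Ha'.
have Hidx : forall k, k \in a -> index k a < size a by move=> k Hk; rewrite index_mem.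
have Hmax : forall p, 0 < p <= size v -> p != ah -> letter v p < letter v ah.
  move=> p Hp Hne; have [k Hk /andP[Hkp Hlk]] := EX _ Hp.
  have Hkah : k <= ah.
    rewrite -(nth_index 0 Hk); apply: (sorted_leq_nth leq_trans leqnn 0 sa');
    rewrite ?inE ?index_mem //; have := Hidx _ Hk; plia.
  have H1 := LE _ _ Hk Hah Hkah.
  rewrite ltn_neqAle (leq_trans Hlk H1) andbT; apply/negP => /eqP E.
  by move/negP: Hne; apply; apply/eqP; exact: (letter_inj _ _ _ Hu Hp Hahr E).
have Hb : forall k, k \in b -> ah <= k.
  move=> k Hk; have [Hkr Hkm] := RM _ Hk; rewrite leqNgt; apply/negP => Hl.
  have H1 := Hkm ah; have H2 := Hmax k Hkr.
  have : letter v ah < letter v k by apply: H1; plia.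
  have : letter v k < letter v ah by apply: H2; rewrite neq_ltn Hl.
  plia.
have [m0 Eg] : exists m0, size b = m0.+2.
  move: Hg; case: (size b) => [|[|m]] // _; by exists m.
have Hb0 : nth 0 b 0 \in b by apply: mem_nth; plia.
have Hb2 : b2 \in b by apply: mem_nth; plia.
have Hbb : nth 0 b 0 < b2.
  by apply: (sorted_ltn_nth ltn_trans 0 sb); rewrite ?inE; plia.
have Hahb2 : ah < b2 by have := Hb _ Hb0; plia.
have [Hb2r _] := RM _ Hb2.
have Hb2l : letter v b2 < letter v ah by apply: Hmax; rewrite ?Hb2r // neq_ltn Hahb2 orbT.
have Hbetween : forall i, a' < i < ah -> letter v i < letter v a'.
  move=> i Hi; have Hir : 0 < i <= size v by plia.
  have [k Hk /andP[Hki Hlk]] := EX _ Hir.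
  have Hka : k <= a'.
    rewrite -(nth_index 0 Hk); have := Hidx _ Hk; move=> Hm.
    case: (ltnP (index k a) n0.+1) => Hm2.
      apply: (sorted_leq_nth leq_trans leqnn 0 sa'); rewrite ?inE ?index_mem //; plia.
    have : ah <= nth 0 a (index k a).
      apply: (sorted_leq_nth leq_trans leqnn 0 sa'); rewrite ?inE ?index_mem //; plia.
    rewrite nth_index //; plia.
  have H1 := LE _ _ Hk Ha' Hka.
  rewrite ltn_neqAle (leq_trans Hlk H1) andbT; apply/negP => /eqP E.
  have := letter_inj _ _ _ Hu Hir Ha'r E; plia.
case E1: (ah == a'.+1).
  left; move/eqP: E1 => E1; split=> //; split; first plia.
  by case; plia.
have Hgap : a'.+1 < ah by move/negbT: E1; plia.
case E2: (b2 == ah.+1).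
  right; left; move/eqP: E2 => E2; split; first plia; split=> //.
  by case; plia.
right; right; split; first plia; split; first plia.
split=> //; first by move/negbT: E2; plia.
move=> j /andP [Hj1 Hj2]; rewrite ltnNge; apply/negP => Hle.
have Hjr : 0 < j <= size v by plia.
have Hjl : letter v j < letter v a'.
  rewrite ltn_neqAle Hle andbT; apply/negP => /eqP E.
  have := letter_inj _ _ _ Hu Hjr Ha'r E; plia.
have Hil : letter v a'.+1 < letter v a' by apply: Hbetween; plia.
have Hir : 0 < a'.+1 <= size v by plia.
have Hne : letter v a'.+1 != letter v j.
  apply/negP => /eqP E; have := letter_inj _ _ _ Hu Hir Hjr E; plia.
have Hs : subseq [:: letter v a'; letter v a'.+1; letter v ah; letter v j; letter v b2] v.
  rewrite -[v in subseq _ v]drop0 /letter.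
  apply: (@subseq_trans _ (drop a'.-1 v)); last by apply: drop_mono.
  apply: (sub_step v _ a'.-1 a'); [plia | plia |].
  apply: (sub_step v _ a' ah.-1); [plia | plia |].
  apply: (sub_step v _ ah.-1 j.-1); [plia | plia |].
  apply: (sub_step v _ j.-1 b2.-1); [plia | plia |].
  apply: (sub_step v _ b2.-1 b2); [plia | plia |].
  exact: sub0seq.
case: (ltngtP (letter v a'.+1) (letter v j)) => Hc.
- case: N3; eexists; split; first exact: Hs.
  exact: (iso1 _ _ _ _ _ Hil Hjl Hlt Hb2l Hc).
- case: N4; eexists; split; first exact: Hs.
  exact: (iso2 _ _ _ _ _ Hil Hjl Hlt Hb2l Hc).
- by rewrite Hc eqxx in Hne.
Qed.
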